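(* Let $\Gamma$ be a reduct of $(\mathbb{Z};<)$ with qe-degree $q$, let $\kappa_1,\kappa_2$ be linear orders, let $S\subseteq\kappa_1.\mathbb{Z}$, and let $f,g\colon S\to\kappa_2.\mathbb{Z}$ satisfy $f\sim_q g$. Then $f$ is a homomorphism from $(\kappa_1.\Gamma)[S]$ to $\kappa_2.\Gamma$ if and only if $g$ is.
   Context: For a linear order $\kappa$, $\kappa.\mathbb{Z}=\kappa\times\mathbb{Z}$ with the lexicographic order; $(a,z)+k=(a,z+k)$. For $x,y\in\kappa.\mathbb{Z}$: $x-y=k\in\mathbb{Z}$ if $x=y+k$, and $x-y=\pm\infty$ if $x,y$ lie in different copies (sign $+$ iff $x>y$). For a reduct $\Gamma$ of $(\mathbb{Z};<)$, $\kappa.\Gamma$ interprets each relation symbol by the relation defined over $(\kappa.\mathbb{Z};<)$ by a first-order formula defining it over $(\mathbb{Z};<)$; $(\kappa.\Gamma)[S]$ is the induced substructure on $S$. The qe-degree of a relation $R$ first-order definable in $(\mathbb{Z};<)$ is the least $q$ such that $R$ has a quantifier-free definition in which every atomic formula has the form $x<y+k$ or $x\le y+k$ with $k\in\mathbb{Z}$, $|k|\le q$; the qe-degree of $\Gamma$ is the supremum over its relations. For $f\colon S\to\kappa.\mathbb{Z}$ and $s\in\mathbb{N}$, $x,y\in S$ are $(f,s)$-connected if there is a sequence $x=u_1,\dots,u_k=y$ in $S$ with $|f(u_i)-f(u_{i+1})|\le s$ for all $i$. For $f,g\colon S\to\kappa.\mathbb{Z}$, $f\sim_s g$ means: $(f,s)$-connectivity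 and $(g,s)$-connectivity coincide; for $(f,s)$-connected $x,y$ we have $f(x)-f(y)=g(x)-g(y)$; and for $x,y$ not $(f,s)$-connected, $f(x)<f(y)\iff g(x)<g(y)$. *)

(* Defs.v *)
From Stdlib Require Import ZArith List Relations.
Import ListNotations.
Open Scope Z_scope.

(** * First-order formulas in the language {<} (with equality).
    Variables are de Bruijn indices: at top level, variable i refers to the
    i-th entry of the tuple; each quantifier binds index 0. *)
Inductive fo : Type :=
| FLt (i j : nat) | FEq (i j : nat) | FTrue | FFalse
| FNot (p : fo) | FAnd (p r : fo) | FOr (p r : fo) | FImp (p r : fo)
| FEx (p : fo) | FAll (p : fo).

Fixpoint fo_sat {T : Type} (lt : T -> T -> Prop) (e : list T) (p : fo) : Prop :=
  match p with
  | FLt i j => match nth_error e i, nth_error e j with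
               | Some a, Some b => lt a b | _, _ => False end
  | FEq i j => match nth_error e i, nth_error e j with
               | Some a, Some b => a = b | _, _ => False end
  | FTrue => True
  | FFalse => False
  | FNot p => ~ fo_sat lt e p
  | FAnd p r => fo_sat lt e p /\ fo_sat lt e r
  | FOr p r => fo_sat lt e p \/ fo_sat lt e r
  | FImp p r => fo_sat lt e p -> fo_sat lt e r
  | FEx p => exists x : T, fo_sat lt (x :: e) p
  | FAll p => forall x : T, fo_sat lt (x :: e) p
  end.

Fixpoint fo_fv_below (n : nat) (p : fo) : Prop :=
  match p with
  | FLt i j | FEq i j => (i < n)%nat /\ (j < n)%nat
  | FTrue | FFalse => True
  | FNot p => fo_fv_below n p
  | FAnd p r | FOr p r | FImp p r => fo_fv_below n p /\ fo_fv_below n r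
  | FEx p | FAll p => fo_fv_below (S n) p
  end.

Inductive qf : Type :=
| QLt (i j : nat) (k : Z) | QLe (i j : nat) (k : Z) | QTrue | QFalse
| QNot (p : qf) | QAnd (p r : qf) | QOr (p r : qf).

Fixpoint qf_sat (e : list Z) (p : qf) : Prop :=
  match p with
  | QLt i j k => match nth_error e i, nth_error e j with
                 | Some a, Some b => a < b + k | _, _ => False end
  | QLe i j k => match nth_error e i, nth_error e j with
                 | Some a, Some b => a <= b + k | _, _ => False end
  | QTrue => True
  | QFalse => False
  | QNot p => ~ qf_sat e p
  | QAnd p r => qf_sat e p /\ qf_sat e r
  | QOr p r => qf_sat e p \/ qf_sat e r
  end.

Fixpoint qf_bound (b : nat) (p : qf) : Prop :=
  match p with
  | QLt _ _ k | QLe _ _ k => Z.abs k <= Z.of_nat b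
  | QTrue | QFalse => True
  | QNot p => qf_bound b p
  | QAnd p r | QOr p r => qf_bound b p /\ qf_bound b r
  end.

(** * Reducts of (Z;<): relational structures on Z each of whose relations
    is given by a first-order {<}-formula with free variables among the
    arguments. *)
Record reduct : Type := {
  sym : Type;
  arity : sym -> nat;
  defn : sym -> fo;
  defn_wf : forall i, fo_fv_below (arity i) (defn i)
}.

Definition qf_def_bound (phi : fo) (n : nat) (b : nat) : Prop :=
  exists psi : qf, qf_bound b psi /\
    forall t : list Z, length t = n -> (fo_sat Z.lt t phi <-> qf_sat t psi).

Definition rel_qe_degree (phi : fo) (n : nat) (d : nat) : Prop :=
  qf_def_bound phi n d /\ forall b, qf_def_bound phi n b -> (d <= b)%nat.

Definition qe_degree (G : reduct) (q : nat) : Prop :=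
  (forall i, exists d, rel_qe_degree (defn G i) (arity G i) d) /\
  (forall i d, rel_qe_degree (defn G i) (arity G i) d -> (d <= q)%nat) /\
  (forall q', (forall i d, rel_qe_degree (defn G i) (arity G i) d -> (d <= q')%nat)
              -> (q <= q')%nat).

Record linorder : Type := {
  lo_car :> Type;
  lo_lt : lo_car -> lo_car -> Prop;
  lo_irrefl : forall x, ~ lo_lt x x;
  lo_trans : forall x y z, lo_lt x y -> lo_lt y z -> lo_lt x z;
  lo_total : forall x y, lo_lt x y \/ x = y \/ lo_lt y x
}.

Definition KZ (K : linorder) : Type := (lo_car K * Z)%type.

Definition kz_lt (K : linorder) (x y : KZ K) : Prop :=
  lo_lt K (fst x) (fst y) \/ (fst x = fst y /\ snd x < snd y).

Inductive ext : Type := Fin (k : Z) | PInf | NInf.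

(** diff_is x y d  :<->  x - y = d *)
Definition diff_is (K : linorder) (x y : KZ K) (d : ext) : Prop :=
  match d with
  | Fin k => x = (fst y, snd y + k)
  | PInf => fst x <> fst y /\ kz_lt K y x
  | NInf => fst x <> fst y /\ kz_lt K x y
  end.

Section Sim.
Variables (K1 K2 : linorder) (S : KZ K1 -> Prop).

Definition close (f : {x | S x} -> KZ K2) (s : nat) (u v : {x | S x}) : Prop :=
  exists k, diff_is K2 (f u) (f v) (Fin k) /\ Z.abs k <= Z.of_nat s.

Definition connected (f : {x | S x} -> KZ K2) (s : nat) : relation {x | S x} :=
  clos_refl_trans _ (close f s).

Definition sim (s : nat) (f g : {x | S x} -> KZ K2) : Prop :=
  (forall x y, connected f s x y <-> connected g s x y) /\
  (forall x y, connected f s x y ->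
     forall d, diff_is K2 (f x) (f y) d <-> diff_is K2 (g x) (g y) d) /\
  (forall x y, ~ connected f s x y -> (kz_lt K2 (f x) (f y) <-> kz_lt K2 (g x) (g y))).

Definition is_hom (G : reduct) (f : {x | S x} -> KZ K2) : Prop :=
  forall (i : sym G) (t : list {x | S x}), length t = arity G i ->
    fo_sat (kz_lt K1) (map (@proj1_sig _ _) t) (defn G i) ->
    fo_sat (kz_lt K2) (map f t) (defn G i).
End Sim.

(* Main.v *)
Require Import Defs.
From Stdlib Require Import ZArith List Relations Classical Lia.
Open Scope Z_scope.

Record zlike := {
 zc : Type; zlt : zc -> zc -> Prop; zsh : zc -> Z -> zc; zpt : zc;
 z_irr : forall x, ~ zlt x x;
 z_tr : forall x y z, zlt x y -> zlt y z -> zlt x z;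
 z_tot : forall x y, zlt x y \/ x = y \/ zlt y x;
 z_sh0 : forall x, zsh x 0 = x;
 z_shD : forall x a b, zsh (zsh x a) b = zsh x (a+b);
 z_shlt : forall x a b, zlt (zsh x a) (zsh x b) <-> a < b;
 z_far1 : forall x y, (forall k, y <> zsh x k) -> zlt x y -> forall k, zlt (zsh x k) y;
 z_far2 : forall x y, (forall k, y <> zsh x k) -> zlt y x -> forall k, zlt y (zsh x k) }.
Arguments zlt {z0}. Arguments zsh {z0}.

Section One.
Variable T : zlike.

Lemma asym (x y : zc T) : zlt x y -> ~ zlt y x.
Proof. intros H1 H2. exact (z_irr T x (z_tr T _ _ _ H1 H2)). Qed.

Lemma sh_inj (x : zc T) a b : zsh x a = zsh x b -> a = b.
Proof.
  intro H. destruct (Z.lt_trichotomy a b) as [h|[h|h]]; auto;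
  apply (proj2 (z_shlt T x _ _)) in h; rewrite H in h; exfalso; eapply z_irr; eauto.
Qed.

Lemma sh_inv (x y : zc T) k : y = zsh x k <-> x = zsh y (-k).
Proof.
  split; intros ->; rewrite z_shD.
  - rewrite Z.add_opp_diag_r, z_sh0; auto.
  - rewrite Z.add_opp_diag_l, z_sh0; auto.
Qed.

Lemma sh_self (x : zc T) k : x = zsh x k <-> k = 0.
Proof.
  split.
  - intro H. symmetry. apply (sh_inj x). rewrite z_sh0. auto.
  - intros ->. rewrite z_sh0. auto.
Qed.

Lemma lt_sh0R (x : zc T) m : zlt x (zsh x m) <-> 0 < m.
Proof. pose proof (z_shlt T x 0 m) as H. rewrite z_sh0 in H. exact H. Qed.
Lemma lt_sh0L (x : zc T) m : zlt (zsh x m) x <-> m < 0.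
Proof. pose proof (z_shlt T x m 0) as H. rewrite z_sh0 in H. exact H. Qed.

Lemma lt_char (x b : zc T) : zlt b x <-> (~ zlt x b /\ b <> x).
Proof.
  split.
  - intro H. split. apply asym; auto. intros ->. eapply z_irr; eauto.
  - intros [H1 H2]. destruct (z_tot T b x) as [h|[h|h]]; tauto.
Qed.

Lemma far_lt_shiftR (a b : zc T) k :
  (forall m, Z.abs m <= Z.abs k -> a <> zsh b m) -> (zlt a (zsh b k) <-> zlt a b).
Proof.
  intro Hf. destruct (classic (exists m, a = zsh b m)) as [[m ->]|Hn].
  - assert (Z.abs m > Z.abs k). { destruct (Z_le_gt_dec (Z.abs m) (Z.abs k)); auto. exfalso; exact (Hf m l eq_refl). }
    rewrite z_shlt, lt_sh0L. lia.
  - assert (Hn' : forall m, a <> zsh b m) by (intros m E; apply Hn; eauto).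
    split; intro H.
    + destruct (z_tot T b a) as [h|[h|h]]; auto.
      * exfalso. exact (asym _ _ H (z_far1 T b a Hn' h k)).
      * exfalso. apply (Hn' 0). rewrite z_sh0; auto.
    + exact (z_far2 T b a Hn' H k).
Qed.

Lemma far_lt_shiftL (a b : zc T) k :
  (forall m, Z.abs m <= Z.abs k -> b <> zsh a m) -> (zlt (zsh a k) b <-> zlt a b).
Proof.
  intro Hf. destruct (classic (exists m, b = zsh a m)) as [[m ->]|Hn].
  - assert (Z.abs m > Z.abs k). { destruct (Z_le_gt_dec (Z.abs m) (Z.abs k)); auto. exfalso; exact (Hf m l eq_refl). }
    rewrite z_shlt, lt_sh0R. lia.
  - assert (Hn' : forall m, b <> zsh a m) by (intros m E; apply Hn; eauto).
    split; intro H.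
    + destruct (z_tot T a b) as [h|[h|h]]; auto.
      * exfalso. apply (Hn' 0). rewrite z_sh0; auto.
      * exfalso. exact (asym _ _ H (z_far2 T a b Hn' h k)).
    + exact (z_far1 T a b Hn' H k).
Qed.

Lemma between (a x : zc T) m : zlt a x -> zlt x (zsh a m) -> exists k, x = zsh a k /\ 0 < k < m.
Proof.
  intros H1 H2. destruct (classic (exists k, x = zsh a k)) as [[k ->]|Hn].
  - exists k. rewrite lt_sh0R in H1. rewrite z_shlt in H2. split; auto; lia.
  - exfalso. assert (Hn' : forall k, x <> zsh a k) by (intros k E; apply Hn; eauto).
    exact (asym _ _ H2 (z_far1 T a x Hn' H1 m)).
Qed.

Lemma farpart (a b : zc T) k N :
  (forall m, Z.abs m < 2*N -> b <> zsh a m) -> Z.abs k < N ->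
  (zlt (zsh a k) b <-> zlt a b) /\ (forall k', Z.abs k' < N -> b <> zsh (zsh a k) k').
Proof.
  intros Hf Hk. split.
  - apply far_lt_shiftL. intros m Hm. apply Hf. lia.
  - intros k' Hk'. rewrite z_shD. apply Hf. lia.
Qed.

Lemma belowpart (c d : zc T) N : 0 < N -> (d = c \/ zlt c d) ->
  zlt (zsh c (-N)) d /\ (forall k', Z.abs k' < N -> d <> zsh (zsh c (-N)) k').
Proof.
  intros HN Hd. destruct (classic (exists m, d = zsh c m)) as [[m ->]|Hn].
  - assert (0 <= m).
    { destruct Hd as [Hd|Hd]. symmetry in Hd. rewrite sh_self in Hd. lia. rewrite lt_sh0R in Hd. lia. }
    split. rewrite z_shlt. lia.
    intros k' Hk' E. rewrite z_shD in E. apply sh_inj in E. lia.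
  - assert (Hn' : forall k, d <> zsh c k) by (intros k E; apply Hn; eauto).
    destruct Hd as [Hd|Hd]. { exfalso. apply (Hn' 0). rewrite z_sh0; auto. }
    split. apply z_far1; auto.
    intros k' _ E. rewrite z_shD in E. exact (Hn' _ E).
Qed.

Lemma abovepart (c d : zc T) N : 0 < N -> (d = c \/ zlt d c) ->
  zlt d (zsh c N) /\ (forall k', Z.abs k' < N -> d <> zsh (zsh c N) k').
Proof.
  intros HN Hd. destruct (classic (exists m, d = zsh c m)) as [[m ->]|Hn].
  - assert (m <= 0).
    { destruct Hd as [Hd|Hd]. symmetry in Hd. rewrite sh_self in Hd. lia. rewrite lt_sh0L in Hd. lia. }
    split. rewrite z_shlt. lia.
    intros k' Hk' E. rewrite z_shD in E. apply sh_inj in E. lia.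
  - assert (Hn' : forall k, d <> zsh c k) by (intros k E; apply Hn; eauto).
    destruct Hd as [Hd|Hd]. { exfalso. apply (Hn' 0). rewrite z_sh0; auto. }
    split. apply z_far2; auto.
    intros k' _ E. rewrite z_shD in E. exact (Hn' _ E).
Qed.

Lemma gappart (c d : zc T) N : 0 < N -> zlt c d -> (forall m, Z.abs m < 2*N -> d <> zsh c m) ->
  zlt (zsh c N) d /\ (forall k', Z.abs k' < N -> d <> zsh (zsh c N) k').
Proof.
  intros HN Hd Hf. split.
  - rewrite far_lt_shiftL; auto. intros m Hm. apply Hf. lia.
  - intros k' Hk'. rewrite z_shD. apply Hf. lia.
Qed.
End One.

Definition pteq {T1 T2 : zlike} (N : Z) (a b : zc T1) (c d : zc T2) : Prop :=
  (zlt a b <-> zlt c d) /\ (forall k, Z.abs k < N -> (b = zsh a k <-> d = zsh c k)).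

Definition teq {T1 T2 : zlike} (N : Z) (e1 : list (zc T1)) (e2 : list (zc T2)) : Prop :=
  length e1 = length e2 /\
  forall i j a b c d, nth_error e1 i = Some a -> nth_error e1 j = Some b ->
    nth_error e2 i = Some c -> nth_error e2 j = Some d -> pteq N a b c d.

Lemma pteq_sym {T1 T2 : zlike} N (a b : zc T1) (c d : zc T2) : pteq N a b c d -> pteq N c d a b.
Proof. intros [H1 H2]. split. tauto. intros k Hk. specialize (H2 k Hk). tauto. Qed.

Lemma teq_sym {T1 T2 : zlike} N (e1 : list (zc T1)) (e2 : list (zc T2)) : teq N e1 e2 -> teq N e2 e1.
Proof. intros [H1 H2]. split. auto. intros. apply pteq_sym. eauto. Qed.

Lemma teq_mono {T1 T2 : zlike} N N' (e1 : list (zc T1)) (e2 : list (zc T2)) : N' <= N -> teq N e1 e2 -> teq N' e1 e2.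
Proof.
  intros HN [H1 H2]. split. auto. intros. destruct (H2 i j a b c d) as [A B]; auto.
  split; auto. intros k Hk. apply B. lia.
Qed.

Lemma teq_none {T1 T2 : zlike} N (e1 : list (zc T1)) (e2 : list (zc T2)) i :
  teq N e1 e2 -> (nth_error e1 i = None <-> nth_error e2 i = None).
Proof. intros [H _]. rewrite !nth_error_None. rewrite H. tauto. Qed.

Lemma teq_some {T1 T2 : zlike} N (e1 : list (zc T1)) (e2 : list (zc T2)) i a :
  teq N e1 e2 -> nth_error e1 i = Some a -> exists c, nth_error e2 i = Some c.
Proof.
  intros H Ha. destruct (nth_error e2 i) eqn:E. eauto.
  apply (teq_none _ _ _ i H) in E. congruence.
Qed.

Lemma pteq_swap {T1 T2 : zlike} N (x b : zc T1) (y d : zc T2) : 0 < N -> pteq N x b y d -> pteq N b x d y.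
Proof.
  intros HN [H1 H2]. assert (E : b = x <-> d = y).
  { pose proof (H2 0 ltac:(lia)) as E. rewrite !z_sh0 in E. exact E. }
  split.
  - rewrite (lt_char T1 x b), (lt_char T2 y d). tauto.
  - intros k Hk. rewrite (sh_inv T1 b x k), (sh_inv T2 d y k). apply H2. lia.
Qed.

Lemma pteq_shifts {T1 T2 : zlike} N (a : zc T1) (c : zc T2) k m :
  pteq N (zsh a k) (zsh a m) (zsh c k) (zsh c m).
Proof.
  split. rewrite !z_shlt. tauto.
  intros k' _. rewrite !z_shD. split; intro E; apply sh_inj in E; rewrite E; auto.
Qed.

Lemma list_max {A} (R : A -> A -> Prop) (Rtr : forall x y z, R x y -> R y z -> R x z)
  (Rtot : forall x y, R x y \/ x = y \/ R y x) (P : A -> Prop) (l : list A) :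
  (forall i a, nth_error l i = Some a -> ~ P a) \/
  exists p a, nth_error l p = Some a /\ P a /\
    forall i b, nth_error l i = Some b -> P b -> b = a \/ R b a.
Proof.
  induction l as [|h t IH].
  - left; intros [|i] a H; discriminate.
  - destruct IH as [Hn | [p [a [Hp [Pa Hm]]]]].
    + destruct (classic (P h)) as [Ph|Ph].
      * right; exists 0%nat, h; split; [reflexivity|split; [exact Ph|]].
        intros [|i] b Hb Pb; simpl in Hb. left; congruence. exfalso; exact (Hn i b Hb Pb).
      * left; intros [|i] b Hb; simpl in Hb. inversion Hb; subst; auto. exact (Hn i b Hb).
    + destruct (classic (P h /\ R a h)) as [[Ph Rah]|Hc].
      * right; exists 0%nat, h; split; [reflexivity|split; [exact Ph|]].
        intros [|i] b Hb Pb; simpl in Hb. left; congruence.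
        destruct (Hm i b Hb Pb) as [->|Hr]; right; eauto.
      * right; exists (S p), a; split; [exact Hp|split; [exact Pa|]].
        intros [|i] b Hb Pb; simpl in Hb.
        -- inversion Hb; subst. destruct (Rtot a b) as [h|[h|h]]; auto. tauto.
        -- eauto.
Qed.

Lemma extend {T1 T2 : zlike} N (e1 : list (zc T1)) (e2 : list (zc T2)) (x : zc T1) :
  0 < N -> teq (2*N) e1 e2 -> exists y : zc T2, teq N (x::e1) (y::e2).
Proof.
  intros HN Hteq.
  assert (Hteq' := Hteq). destruct Hteq' as [Hlen Hp].
  enough (Hy : exists y, forall j b d, nth_error e1 j = Some b -> nth_error e2 j = Some d -> pteq N x b y d).
  { destruct Hy as [y Hy]. exists y. split. simpl; congruence.
    intros [|i] [|j] a b c d Ha Hb Hc Hd; cbn [nth_error] in Ha, Hb, Hc, Hd.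
    - inversion Ha; inversion Hb; inversion Hc; inversion Hd; subst.
      split. split; intro h; exfalso; eapply z_irr; eauto.
      intros k _. rewrite !sh_self. tauto.
    - inversion Ha; inversion Hc; subst. eauto.
    - inversion Hb; inversion Hd; subst. apply pteq_swap; eauto.
    - destruct (Hp i j a b c d) as [A B]; auto. split; auto. intros k Hk. apply B. lia. }
  destruct (classic (exists i a c k, nth_error e1 i = Some a /\ nth_error e2 i = Some c /\
                       Z.abs k < N /\ x = zsh a k)) as [[i [a [c [k [Ha [Hc [Hk ->]]]]]]]|Hno0].
  - exists (zsh c k). intros j b d Hb Hd.
    destruct (Hp i j a b c d Ha Hb Hc Hd) as [O D].
    destruct (classic (exists m, Z.abs m < 2*N /\ b = zsh a m)) as [[m [Hm ->]]|Hf].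
    + assert (d = zsh c m) as -> by (apply D; auto; reflexivity). apply pteq_shifts.
    + assert (Hf1 : forall m, Z.abs m < 2*N -> b <> zsh a m) by (intros m Hm E; apply Hf; eauto).
      assert (Hf2 : forall m, Z.abs m < 2*N -> d <> zsh c m) by (intros m Hm E; apply (Hf1 m Hm); apply D; auto).
      destruct (farpart T1 a b k N Hf1 Hk) as [F1 G1].
      destruct (farpart T2 c d k N Hf2 Hk) as [F2 G2].
      split. rewrite F1, F2. exact O.
      intros k' Hk'. split; intro E; exfalso; [exact (G1 k' Hk' E)|exact (G2 k' Hk' E)].
  - assert (Hno : forall i a k, nth_error e1 i = Some a -> Z.abs k < N -> x <> zsh a k).
    { intros i a k Ha Hk E. destruct (teq_some _ _ _ _ _ Hteq Ha) as [c Hc]. apply Hno0. exists i, a, c, k. auto. }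
    clear Hno0.
    assert (Hfarx : forall j b k', nth_error e1 j = Some b -> Z.abs k' < N -> b <> zsh x k').
    { intros j b k' Hb Hk' E. exact (Hno j b (-k') Hb ltac:(lia) (proj1 (sh_inv _ _ _ _) E)). }
    assert (Hneq : forall j b, nth_error e1 j = Some b -> b <> x).
    { intros j b Hb E. refine (Hno j b 0 Hb ltac:(lia) _). rewrite z_sh0. auto. }
    destruct (list_max (@zlt T1) (z_tr T1) (z_tot T1) (fun a => zlt a x) e1) as [Hnone | [p [ap [Hpp [Hlt Hmax]]]]].
    + destruct (list_max (fun u v => @zlt T2 v u) (fun u v w h1 h2 => z_tr T2 _ _ _ h2 h1)
                  (fun u v => match z_tot T2 u v with or_introl h => or_intror (or_intror h)
                              | or_intror (or_introl h) => or_intror (or_introl h)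
                              | or_intror (or_intror h) => or_introl h end)
                  (fun _ => True) e2) as [Hemp | [p0 [c0 [Hp0 [_ Hmin]]]]].
      * exists (zpt T2). intros j b d _ Hd. exfalso. exact (Hemp j d Hd I).
      * exists (zsh c0 (-N)). intros j b d Hb Hd.
        assert (Hxb : zlt x b).
        { destruct (z_tot T1 x b) as [h|[h|h]]; auto. exfalso; exact (Hneq j b Hb (eq_sym h)).
          exfalso; exact (Hnone j b Hb h). }
        destruct (belowpart T2 c0 d N HN (Hmin j d Hd I)) as [L1 L2].
        split. tauto. intros k' Hk'. split; intro E; exfalso; [exact (Hfarx j b k' Hb Hk' E)|exact (L2 k' Hk' E)].
    + destruct (teq_some _ _ _ _ _ Hteq Hpp) as [cp Hcp].
      exists (zsh cp N). intros j b d Hb Hd.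
      destruct (z_tot T1 b x) as [h|[h|h]].
      * assert (Hdc : d = cp \/ zlt d cp).
        { destruct (Hmax j b Hb h) as [->|h2].
          - left. destruct (Hp p j ap ap cp d Hpp Hb Hcp Hd) as [_ D].
            pose proof (D 0 ltac:(lia)) as D0. rewrite !z_sh0 in D0. apply D0. auto.
          - right. destruct (Hp j p b ap d cp Hb Hpp Hd Hcp) as [O _]. tauto. }
        destruct (abovepart T2 cp d N HN Hdc) as [L1 L2].
        split. split; intro E; exfalso; [exact (asym _ _ _ E h)|exact (asym _ _ _ E L1)].
        intros k' Hk'. split; intro E; exfalso; [exact (Hfarx j b k' Hb Hk' E)|exact (L2 k' Hk' E)].
      * exfalso. exact (Hneq j b Hb h).
      * destruct (Hp p j ap b cp d Hpp Hb Hcp Hd) as [O D].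
        assert (Hf1 : forall m, Z.abs m < 2*N -> b <> zsh ap m).
        { intros m Hm Eb. rewrite Eb in h.
          destruct (between T1 ap x m Hlt h) as [k [Ek Hk]].
          destruct (Z_lt_le_dec k N) as [Hk1|Hk1].
          - apply (Hno p ap k Hpp); auto. lia.
          - apply (Hno j b (k - m) Hb). lia. rewrite Eb, z_shD. rewrite Ek. f_equal. lia. }
        assert (Hf2 : forall m, Z.abs m < 2*N -> d <> zsh cp m) by (intros m Hm E; apply (Hf1 m Hm); apply D; auto).
        assert (Hcd : zlt cp d) by (apply O; eapply z_tr; eauto).
        destruct (gappart T2 cp d N HN Hcd Hf2) as [L1 L2].
        split. tauto.
        intros k' Hk'. split; intro E; exfalso; [exact (Hfarx j b k' Hb Hk' E)|exact (L2 k' Hk' E)].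
Qed.

Fixpoint qd (p : fo) : nat :=
  match p with
  | FNot p => qd p
  | FAnd p r | FOr p r | FImp p r => Nat.max (qd p) (qd r)
  | FEx p | FAll p => S (qd p)
  | _ => O
  end.

Lemma pow_mono a b : (a <= b)%nat -> 2 ^ Z.of_nat a <= 2 ^ Z.of_nat b.
Proof. intro H. apply Z.pow_le_mono_r; lia. Qed.

Lemma pow_pos' a : 0 < 2 ^ Z.of_nat a.
Proof. apply Z.pow_pos_nonneg; lia. Qed.

Lemma pow_S a : 2 ^ Z.of_nat (S a) = 2 * 2 ^ Z.of_nat a.
Proof. rewrite Nat2Z.inj_succ, Z.pow_succ_r; lia. Qed.

Lemma transfer (p : fo) : forall (T1 T2 : zlike) N (e1 : list (zc T1)) (e2 : list (zc T2)),
  2 ^ Z.of_nat (qd p) <= N -> teq N e1 e2 -> (fo_sat zlt e1 p <-> fo_sat zlt e2 p).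
Proof.
  induction p; intros T1 T2 N e1 e2 HN Ht; cbn [qd] in HN; simpl.
  - pose proof (pow_pos' 0).
    destruct (nth_error e1 i) as [a|] eqn:Ea;
    [destruct (teq_some _ _ _ _ _ Ht Ea) as [c Ec]; rewrite Ec|
     apply (teq_none _ _ _ _ Ht) in Ea; rewrite Ea; tauto];
    (destruct (nth_error e1 j) as [b|] eqn:Eb;
    [destruct (teq_some _ _ _ _ _ Ht Eb) as [d Ed]; rewrite Ed|
     apply (teq_none _ _ _ _ Ht) in Eb; rewrite Eb; tauto]).
    destruct Ht as [_ Hp]. destruct (Hp i j a b c d) as [O _]; auto.
  - pose proof (pow_pos' 0).
    destruct (nth_error e1 i) as [a|] eqn:Ea;
    [destruct (teq_some _ _ _ _ _ Ht Ea) as [c Ec]; rewrite Ec|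
     apply (teq_none _ _ _ _ Ht) in Ea; rewrite Ea; tauto];
    (destruct (nth_error e1 j) as [b|] eqn:Eb;
    [destruct (teq_some _ _ _ _ _ Ht Eb) as [d Ed]; rewrite Ed|
     apply (teq_none _ _ _ _ Ht) in Eb; rewrite Eb; tauto]).
    destruct Ht as [_ Hp]. destruct (Hp i j a b c d) as [_ D]; auto.
    pose proof (D 0 ltac:(simpl in *; lia)) as D0. rewrite !z_sh0 in D0.
    split; intro E; symmetry; apply D0; symmetry; auto.
  - tauto.
  - tauto.
  - rewrite (IHp T1 T2 N e1 e2 HN Ht). tauto.
  - pose proof (pow_mono (qd p1) _ (Nat.le_max_l (qd p1) (qd p2))).
    pose proof (pow_mono (qd p2) _ (Nat.le_max_r (qd p1) (qd p2))).
    rewrite (IHp1 T1 T2 N e1 e2 ltac:(lia) Ht), (IHp2 T1 T2 N e1 e2 ltac:(lia) Ht). tauto.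
  - pose proof (pow_mono (qd p1) _ (Nat.le_max_l (qd p1) (qd p2))).
    pose proof (pow_mono (qd p2) _ (Nat.le_max_r (qd p1) (qd p2))).
    rewrite (IHp1 T1 T2 N e1 e2 ltac:(lia) Ht), (IHp2 T1 T2 N e1 e2 ltac:(lia) Ht). tauto.
  - pose proof (pow_mono (qd p1) _ (Nat.le_max_l (qd p1) (qd p2))).
    pose proof (pow_mono (qd p2) _ (Nat.le_max_r (qd p1) (qd p2))).
    rewrite (IHp1 T1 T2 N e1 e2 ltac:(lia) Ht), (IHp2 T1 T2 N e1 e2 ltac:(lia) Ht). tauto.
  - rewrite pow_S in HN. pose proof (pow_pos' (qd p)).
    assert (Ht2 : teq (2 * 2 ^ Z.of_nat (qd p)) e1 e2) by (eapply teq_mono; [|exact Ht]; lia).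
    split; intros [x Hx].
    + destruct (extend (2 ^ Z.of_nat (qd p)) e1 e2 x ltac:(lia) Ht2) as [y Hy]. exists y.
      apply (IHp T1 T2 _ _ _ (Z.le_refl _) Hy). auto.
    + destruct (extend (2 ^ Z.of_nat (qd p)) e2 e1 x ltac:(lia) (teq_sym _ _ _ Ht2)) as [y Hy]. exists y.
      apply (IHp T1 T2 _ _ _ (Z.le_refl _) (teq_sym _ _ _ Hy)). auto.
  - rewrite pow_S in HN. pose proof (pow_pos' (qd p)).
    assert (Ht2 : teq (2 * 2 ^ Z.of_nat (qd p)) e1 e2) by (eapply teq_mono; [|exact Ht]; lia).
    split; intros Hx x.
    + destruct (extend (2 ^ Z.of_nat (qd p)) e2 e1 x ltac:(lia) (teq_sym _ _ _ Ht2)) as [y Hy].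
      apply (IHp T1 T2 _ _ _ (Z.le_refl _) (teq_sym _ _ _ Hy)). auto.
    + destruct (extend (2 ^ Z.of_nat (qd p)) e1 e2 x ltac:(lia) Ht2) as [y Hy].
      apply (IHp T1 T2 _ _ _ (Z.le_refl _) Hy). auto.
Qed.

Lemma build (T1 T2 : zlike) (e2 : list (zc T2)) : forall N, 0 < N -> exists e1 : list (zc T1), teq N e1 e2.
Proof.
  induction e2 as [|y e2 IH]; intros N HN.
  - exists nil. split. reflexivity. intros i j a b c d Ha. destruct i; discriminate.
  - destruct (IH (2*N) ltac:(lia)) as [e1 H1].
    destruct (extend N e2 e1 y HN (teq_sym _ _ _ H1)) as [x Hx].
    exists (x :: e1). apply teq_sym. exact Hx.
Qed.

Lemma atom_transfer {T1 T2 : zlike} N (a b : zc T1) (c d : zc T2) k :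
  pteq N a b c d -> pteq N b a d c -> Z.abs k < N -> (zlt a (zsh b k) <-> zlt c (zsh d k)).
Proof.
  intros [O1 D1] [O2 D2] Hk.
  destruct (classic (exists m, Z.abs m < N /\ a = zsh b m)) as [[m [Hm ->]]|Hf].
  - assert (c = zsh d m) as -> by (apply D2; auto). rewrite !z_shlt. tauto.
  - assert (Hf1 : forall m, Z.abs m <= Z.abs k -> a <> zsh b m) by (intros m Hm E; apply Hf; exists m; split; auto; lia).
    assert (Hf2 : forall m, Z.abs m <= Z.abs k -> c <> zsh d m) by (intros m Hm E; apply (Hf1 m Hm); apply D2; auto; lia).
    rewrite (far_lt_shiftR T1 a b k Hf1), (far_lt_shiftR T2 c d k Hf2). exact O1.
Qed.

Definition Zinst : zlike.
Proof.
  refine {| zc := Z; zlt := Z.lt; zsh := fun x k => x + k; zpt := 0 |};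
  intros; try lia; exfalso; match goal with H: forall k, _ <> _ |- _ => apply (H (y - x)); lia end.
Defined.

Definition KZinst (K : linorder) (pt : KZ K) : zlike.
Proof.
  refine {| zc := KZ K; zlt := kz_lt K; zsh := fun x k => (fst x, snd x + k); zpt := pt |}.
  - intros x [h|[_ h]]. exact (lo_irrefl K _ h). lia.
  - intros x y z [h1|[e1 h1]] [h2|[e2 h2]]; unfold kz_lt.
    + left; eapply lo_trans; eauto.
    + left; rewrite <- e2; auto.
    + left; rewrite e1; auto.
    + right; split; [congruence|lia].
  - intros [x1 x2] [y1 y2]; unfold kz_lt; simpl.
    destruct (lo_total K x1 y1) as [h|[->|h]]; auto.
    destruct (Z.lt_trichotomy x2 y2) as [h|[->|h]]; auto.
  - intros [x1 x2]; simpl. rewrite Z.add_0_r; auto.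
  - intros [x1 x2] a b; simpl. rewrite Z.add_assoc; auto.
  - intros [x1 x2] a b; unfold kz_lt; simpl. split.
    + intros [h|[_ h]]. exfalso; exact (lo_irrefl K _ h). lia.
    + intro h; right; split; auto; lia.
  - intros [x1 x2] [y1 y2] H [h|[e h]]; simpl in *.
    + intro k; left; auto.
    + subst. exfalso. apply (H (y2 - x2)). f_equal. lia.
  - intros [x1 x2] [y1 y2] H [h|[e h]]; simpl in *.
    + intro k; left; auto.
    + subst. exfalso. apply (H (y2 - x2)). f_equal. lia.
Defined.

Lemma qf_bound_mono d q psi : qf_bound d psi -> (d <= q)%nat -> qf_bound q psi.
Proof. induction psi; simpl; intuition lia. Qed.

Lemma qf_pres (q : nat) (e e' : list Z) psi : length e = length e' -> qf_bound q psi ->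
  (forall i j a b a' b' k, nth_error e i = Some a -> nth_error e j = Some b ->
     nth_error e' i = Some a' -> nth_error e' j = Some b' -> Z.abs k <= Z.of_nat q ->
     (a < b + k <-> a' < b' + k)) -> (qf_sat e psi <-> qf_sat e' psi).
Proof.
  intros Hl Hb H. assert (Hn : forall i, nth_error e i = None <-> nth_error e' i = None).
  { intro i. rewrite !nth_error_None, Hl. tauto. }
  induction psi; simpl in *.
  - destruct (nth_error e i) as [a|] eqn:Ea; [|apply Hn in Ea; rewrite Ea; tauto].
    destruct (nth_error e' i) as [a'|] eqn:Ea'; [|apply Hn in Ea'; congruence].
    destruct (nth_error e j) as [b|] eqn:Eb; [|apply Hn in Eb; rewrite Eb; tauto].
    destruct (nth_error e' j) as [b'|] eqn:Eb'; [|apply Hn in Eb'; congruence].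
    eauto.
  - destruct (nth_error e i) as [a|] eqn:Ea; [|apply Hn in Ea; rewrite Ea; tauto].
    destruct (nth_error e' i) as [a'|] eqn:Ea'; [|apply Hn in Ea'; congruence].
    destruct (nth_error e j) as [b|] eqn:Eb; [|apply Hn in Eb; rewrite Eb; tauto].
    destruct (nth_error e' j) as [b'|] eqn:Eb'; [|apply Hn in Eb'; congruence].
    pose proof (H j i b a b' a' (-k) Eb Ea Eb' Ea' ltac:(lia)). lia.
  - tauto.
  - tauto.
  - rewrite IHpsi; tauto.
  - destruct Hb. rewrite IHpsi1, IHpsi2; tauto.
  - destruct Hb. rewrite IHpsi1, IHpsi2; tauto.
Qed.

Lemma kz_same (K : linorder) c a b : kz_lt K (c, a) (c, b) <-> a < b.
Proof. unfold kz_lt; simpl. split. intros [h|[_ h]]; auto. exfalso; exact (lo_irrefl K _ h). auto. Qed.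

Lemma kz_difffst (K : linorder) u1 v1 a b : u1 <> v1 -> (kz_lt K (u1, a) (v1, b) <-> lo_lt K u1 v1).
Proof. intro H. unfold kz_lt; simpl. split. intros [h|[h _]]; auto; congruence. auto. Qed.

Lemma kz_diff (K : linorder) (u v u' v' : KZ K) k :
  (forall d, diff_is K u v d <-> diff_is K u' v' d) ->
  (kz_lt K u (fst v, snd v + k) <-> kz_lt K u' (fst v', snd v' + k)).
Proof.
  destruct u as [u1 u2], v as [v1 v2], u' as [u1' u2'], v' as [v1' v2']. simpl. intro H.
  destruct (classic (u1 = v1)) as [<-|Hne].
  - assert (E : diff_is K (u1, u2) (u1, v2) (Fin (u2 - v2))) by (simpl; f_equal; lia).
    apply H in E. simpl in E. inversion E; subst. rewrite !kz_same. lia.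
  - rewrite kz_difffst by auto.
    destruct (lo_total K u1 v1) as [h|[h|h]]; [|congruence|].
    + assert (E : diff_is K (u1, u2) (v1, v2) NInf) by (simpl; split; auto; left; auto).
      apply H in E. destruct E as [E1 E2]. simpl in E1. rewrite kz_difffst by auto.
      apply kz_difffst in E2; auto. tauto.
    + assert (E : diff_is K (u1, u2) (v1, v2) PInf) by (simpl; split; auto; left; auto).
      apply H in E. destruct E as [E1 E2]. simpl in E1. rewrite kz_difffst by auto.
      apply kz_difffst in E2; auto.
      split; intro h'; exfalso; eapply lo_irrefl; eapply lo_trans; eauto.
Qed.

Lemma sim_sym K1 K2 S q f g : sim K1 K2 S q f g -> sim K1 K2 S q g f.
Proof.
  intros [C [D O]]. split; [|split].
  - intros x y. rewrite C. tauto.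
  - intros x y H d. apply C in H. rewrite D; auto. tauto.
  - intros x y H. rewrite <- C in H. rewrite O; auto. tauto.
Qed.

Lemma kz_atom K1 K2 S q f g (Hs : sim K1 K2 S q f g) x y k : Z.abs k <= Z.of_nat q ->
  (kz_lt K2 (f x) (fst (f y), snd (f y) + k) <-> kz_lt K2 (g x) (fst (g y), snd (g y) + k)).
Proof.
  intro Hk. destruct Hs as [C [D O]].
  destruct (classic (connected K1 K2 S f q x y)) as [Hc|Hc].
  - apply kz_diff. apply D. auto.
  - assert (Hc' : ~ connected K1 K2 S g q x y) by (rewrite <- C; auto).
    assert (Hf1 : forall m, Z.abs m <= Z.abs k -> f x <> (fst (f y), snd (f y) + m)).
    { intros m Hm E. apply Hc. apply rt_step. exists m. split; [exact E|lia]. }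
    assert (Hf2 : forall m, Z.abs m <= Z.abs k -> g x <> (fst (g y), snd (g y) + m)).
    { intros m Hm E. apply Hc'. apply rt_step. exists m. split; [exact E|lia]. }
    transitivity (kz_lt K2 (f x) (f y)).
    exact (far_lt_shiftR (KZinst K2 (f x)) (f x) (f y) k Hf1).
    transitivity (kz_lt K2 (g x) (g y)).
    apply O; auto.
    symmetry. exact (far_lt_shiftR (KZinst K2 (f x)) (g x) (g y) k Hf2).
Qed.

Lemma hom_dir G q K1 K2 S f g : qe_degree G q -> sim K1 K2 S q f g ->
  is_hom K1 K2 S G f -> is_hom K1 K2 S G g.
Proof.
  intros HQ Hs Hf i t Hlen Hsat. specialize (Hf i t Hlen Hsat).
  destruct t as [|s t'] eqn:Et. { simpl in *. exact Hf. }
  rewrite <- Et in *.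
  set (T2 := KZinst K2 (f s)).
  destruct HQ as [Hex [Hle _]]. destruct (Hex i) as [dd Hdd].
  pose proof (Hle i dd Hdd) as Hddq. destruct Hdd as [[psi [Hb Hpsi]] _].
  set (N := 2 ^ Z.of_nat (qd (defn G i)) + Z.of_nat q + 1).
  assert (HN : 0 < N) by (pose proof (pow_pos' (qd (defn G i))); unfold N; lia).
  destruct (build Zinst T2 (map f t) N HN) as [af Hf'].
  destruct (build Zinst T2 (map g t) N HN) as [ag Hg'].
  assert (Laf : length af = arity G i) by (destruct Hf' as [L _]; rewrite L, length_map; auto).
  assert (Lag : length ag = arity G i) by (destruct Hg' as [L _]; rewrite L, length_map; auto).
  assert (HfZ : fo_sat Z.lt af (defn G i)).
  { apply (proj2 (transfer (defn G i) Zinst T2 N af (map f t) ltac:(unfold N; lia) Hf')). exact Hf. }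
  apply (Hpsi af Laf) in HfZ.
  assert (HgZ : qf_sat ag psi).
  { assert (Lq : length af = length ag) by (transitivity (arity G i); [exact Laf|symmetry; exact Lag]).
    refine (proj1 (qf_pres q af ag psi Lq (qf_bound_mono _ _ _ Hb Hddq) _) HfZ).
    intros i0 j0 a b a' b' k Ha Hb0 Ha' Hb' Hk.
    destruct (teq_some _ _ _ _ _ Hf' Ha) as [c Hc].
    destruct (teq_some _ _ _ _ _ Hf' Hb0) as [d Hd].
    rewrite nth_error_map in Hc, Hd.
    destruct (nth_error t i0) as [si|] eqn:Esi; [|discriminate].
    destruct (nth_error t j0) as [sj|] eqn:Esj; [|discriminate].
    simpl in Hc, Hd. inversion Hc; inversion Hd; subst c d.
    assert (Hgi : nth_error (map g t) i0 = Some (g si)) by (rewrite nth_error_map, Esi; reflexivity).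
    assert (Hgj : nth_error (map g t) j0 = Some (g sj)) by (rewrite nth_error_map, Esj; reflexivity).
    assert (Hfi : nth_error (map f t) i0 = Some (f si)) by (rewrite nth_error_map, Esi; reflexivity).
    assert (Hfj : nth_error (map f t) j0 = Some (f sj)) by (rewrite nth_error_map, Esj; reflexivity).
    destruct Hf' as [_ Pf]. destruct Hg' as [_ Pg].
    assert (HkN : Z.abs k < N) by (pose proof (pow_pos' (qd (defn G i))); unfold N; lia).
    etransitivity.
    exact (atom_transfer (T1 := Zinst) (T2 := T2) N a b (f si) (f sj) k
             (Pf i0 j0 a b _ _ Ha Hb0 Hfi Hfj) (Pf j0 i0 b a _ _ Hb0 Ha Hfj Hfi) HkN).
    etransitivity.
    exact (kz_atom K1 K2 S q f g Hs si sj k Hk).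
    symmetry.
    exact (atom_transfer (T1 := Zinst) (T2 := T2) N a' b' (g si) (g sj) k
             (Pg i0 j0 a' b' _ _ Ha' Hb' Hgi Hgj) (Pg j0 i0 b' a' _ _ Hb' Ha' Hgj Hgi) HkN). }
  apply (Hpsi ag Lag) in HgZ.
  exact (proj1 (transfer (defn G i) Zinst T2 N ag (map g t) ltac:(unfold N; lia) Hg') HgZ).
Qed.

Theorem mainTheorem6 (G : reduct) (q : nat) (K1 K2 : linorder)
  (S : KZ K1 -> Prop) (f g : {x | S x} -> KZ K2) :
  qe_degree G q -> sim K1 K2 S q f g ->
  (is_hom K1 K2 S G f <-> is_hom K1 K2 S G g).
Proof.
  intros HQ Hs. split.
  - apply hom_dir with q; auto.
  - apply hom_dir with q; auto. apply sim_sym; auto.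
Qed.
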